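(* Let $k\ge1$ and let $\Gamma\subset\mathbb{R}_+^k$ be a nonempty compact set. Let $\mu_n=(q_n,s_n,b_n)$, $n=1,2,\dots$, and $\mu=(q,s,b)$ be mechanisms in $\mathcal{M}_\Gamma$. Suppose that $b_n$ converges pointwise to $b$ on $\mathbb{R}^k$ and that $\mu$ is seller favorable. Then $\limsup_{n\to\infty}s_n(x)\le s(x)$ for every $x\in\mathbb{R}_+^k$, and consequently $\limsup_{n\to\infty}R(\mu_n;X)\le R(\mu;X)$ for every random valuation $X$ with values in $\mathbb{R}_+^k$ and finite expectation ($\mathbb{E}\|X\|<\infty$).
   Context: A $\Gamma$-mechanism consists of $q:\mathbb{R}_+^k\to\Gamma$ and $s:\mathbb{R}_+^k\to\mathbb{R}$; it is IC if $q(x)\cdot x-s(x)\ge q(y)\cdot x-s(y)$ for all $x,y\in\mathbb{R}_+^k$, IR if $q(x)\cdot x-s(x)\ge0$ for all $x\in\mathbb{R}_+^k$, and NPT (no positive transfer) if $s(x)\ge0$ for all $x\in\mathbb{R}_+^k$. $\mathcal{M}_\Gamma$ is the set of IC, IR and NPT $\Gamma$-mechanisms. The buyer payoff function of the mechanism is the function $b:\mathbb{R}^k\to\mathbb{R}$, $b(x):=\sup_{z\in\mathbb{R}_+^k}[q(z)\cdot x-s(z)]$ (for IC mechanisms $b(x)=q(x)\cdot x-s(x)$ on $\mathbb{R}_+^k$); a mechanism is written $\mu=(q,s,b)$. For a convex $f:\mathbb{R}^k\to\mathbb{R}$, $f'(x;y):=\lim_{\delta\to0^+}(f(x+\delta y)-f(x))/\delta$.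 A mechanism $\mu=(q,s,b)\in\mathcal{M}_\Gamma$ is seller favorable if $s(x)=b'(x;x)-b(x)$ for every $x\in\mathbb{R}_+^k$. The revenue is $R(\mu;X):=\mathbb{E}[s(X)]$. *)

(* Defs.v *)
From HB Require Import structures.
From mathcomp Require Import all_boot all_order all_algebra.
From mathcomp Require Import all_classical all_reals all_analysis.
Set Implicit Arguments. Unset Strict Implicit. Unset Printing Implicit Defensive.
Import Order.TTheory GRing.Theory Num.Theory.
Import numFieldNormedType.Exports.
Local Open Scope classical_set_scope.
Local Open Scope ring_scope.

Definition dotv {R : realType} {k : nat} (u v : 'rV[R]_k) : R :=
  \sum_(i < k) u ord0 i * v ord0 i.

Definition nonneg {R : realType} {k : nat} (x : 'rV[R]_k) : Prop :=
  forall i : 'I_k, 0 <= x ord0 i.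

(* Gamma-mechanism (q, s), given on all of R^k but only its values on R_+^k matter *)
Definition IC {R : realType} {k : nat} (q : 'rV[R]_k -> 'rV[R]_k) (s : 'rV[R]_k -> R) :=
  forall x y, nonneg x -> nonneg y -> dotv (q y) x - s y <= dotv (q x) x - s x.
Definition IR {R : realType} {k : nat} (q : 'rV[R]_k -> 'rV[R]_k) (s : 'rV[R]_k -> R) :=
  forall x, nonneg x -> 0 <= dotv (q x) x - s x.
Definition NPT {R : realType} {k : nat} (s : 'rV[R]_k -> R) :=
  forall x, nonneg x -> 0 <= s x.

Definition in_M {R : realType} {k : nat} (Gamma : set 'rV[R]_k)
  (q : 'rV[R]_k -> 'rV[R]_k) (s : 'rV[R]_k -> R) : Prop :=
  (forall x, nonneg x -> Gamma (q x)) /\ IC q s /\ IR q s /\ NPT s.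

Definition payoff {R : realType} {k : nat} (q : 'rV[R]_k -> 'rV[R]_k) (s : 'rV[R]_k -> R)
  (x : 'rV[R]_k) : R :=
  sup [set dotv (q z) x - s z | z in nonneg].

(* seller favorable: s(x) = b'(x;x) - b(x), where b'(x;x) is the limit of the
   difference quotient (b(x + d x) - b(x))/d as d -> 0+ *)
Definition seller_favorable {R : realType} {k : nat}
  (q : 'rV[R]_k -> 'rV[R]_k) (s : 'rV[R]_k -> R) : Prop :=
  forall x, nonneg x ->
    (fun d : R => (payoff q s (x + d *: x) - payoff q s x) / d) @ 0^'+
      --> (s x + payoff q s x).

(* Main.v *)
Require Import Defs.
From HB Require Import structures.
From mathcomp Require Import all_boot all_order all_algebra.
From mathcomp Require Import all_classical all_reals all_analysis.
Import Order.TTheory GRing.Theory Num.Theory.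
Import numFieldNormedType.Exports.
Local Open Scope classical_set_scope.
From mathcomp Require Import ring lra.
From mathcomp Require Import measurable_realfun.
Local Open Scope ring_scope.
Lemma dotv_scale {R : realType} {k : nat} (u x : 'rV[R]_k) (d : R) :
  dotv u (x + d *: x) = (1 + d) * dotv u x.
Proof.
rewrite /dotv mulr_sumr; apply: eq_bigr => i _; rewrite !mxE; ring.
Qed.

Lemma nonneg_scale {R : realType} {k : nat} (x : 'rV[R]_k) (d : R) :
  nonneg x -> 0 <= d -> nonneg (x + d *: x).
Proof.
move=> hx hd i; rewrite !mxE; apply: addr_ge0 => //; exact: mulr_ge0.
Qed.

Lemma payoff_eq {R : realType} {k : nat} {q : 'rV[R]_k -> 'rV[R]_k} {s : 'rV[R]_k -> R} :
  IC q s -> forall y, nonneg y -> payoff q s y = dotv (q y) y - s y.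
Proof.
move=> hic y hy; apply/eqP; rewrite eq_le; apply/andP; split.
- apply: ge_sup; first by exists (dotv (q y) y - s y), y.
  by move=> _ [z hz <-]; exact: hic.
- apply: (ub_le_sup _); last by exists y.
  by exists (dotv (q y) y - s y) => _ [z hz <-]; exact: hic.
Qed.

Lemma payoff_ge {R : realType} {k : nat} {q : 'rV[R]_k -> 'rV[R]_k} {s : 'rV[R]_k -> R} :
  IC q s -> forall x y, nonneg x -> nonneg y ->
  dotv (q x) y - s x <= payoff q s y.
Proof.
move=> hic x y hx hy.
apply: (ub_le_sup _); last by exists x.
by exists (dotv (q y) y - s y) => _ [z hz <-]; exact: hic.
Qed.

Lemma s_bound {R : realType} {k : nat} {q : 'rV[R]_k -> 'rV[R]_k} {s : 'rV[R]_k -> R} {x : 'rV[R]_k} {d : R} :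
  IC q s -> nonneg x -> 0 < d ->
  s x <= (payoff q s (x + d *: x) - payoff q s x) / d - payoff q s x.
Proof.
move=> hic hx d0.
have := payoff_ge hic _ _ hx (nonneg_scale _ _ hx (ltW d0)).
rewrite dotv_scale (payoff_eq hic x hx) => h.
rewrite lerBrDr ler_pdivlMr //.
set B := payoff q s (x + d *: x) in h *.
set a := dotv (q x) x in h *.
nra.
Qed.

Lemma le_limn_esup (R : realType) (u v : (\bar R)^nat) :
  (forall n, (u n <= v n)%E) -> (limn_esup u <= limn_esup v)%E.
Proof.
move=> uv; rewrite !limn_esup_lim; apply: lee_lim; try exact: is_cvg_esups.
apply: nearW => n; apply: ge_ereal_sup => _ [m /= hm <-].
apply: le_trans (uv m) _; apply: ereal_sup_ubound; by exists m.
Qed.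

Lemma part1 {R : realType} {k : nat} (qn : nat -> 'rV[R]_k -> 'rV[R]_k) sn q s
  (hic : forall n, IC (qn n) (sn n))
  (hconv : forall x : 'rV[R]_k,
      (fun n => payoff (qn n) (sn n) x) @ \oo --> payoff q s x)
  (hsf : seller_favorable q s) :
  forall x, nonneg x -> (limn_esup (fun n => (sn n x)%:E) <= (s x)%:E)%E.
Proof.
move=> x hx.
set b := payoff q s.
pose psi d := (b (x + d *: x) - b x) / d - b x.
have key : forall d, 0 < d -> (limn_esup (fun n => (sn n x)%:E) <= (psi d)%:E)%E.
  move=> d d0.
  pose phi n := (payoff (qn n) (sn n) (x + d *: x) - payoff (qn n) (sn n) x) / d
                - payoff (qn n) (sn n) x.
  have cphi : phi n @[n --> \oo] --> psi d.
    apply: cvgB => //; apply: cvgMr_tmp; apply: cvgB => //.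
  have <- : limn_esup (fun n => (phi n)%:E) = (psi d)%:E.
    apply: (cvg_limn_einf_sup _).2; apply: cvg_EFin => //; by apply: nearW.
  apply: le_limn_esup => n; rewrite lee_fin; exact: s_bound.
have cpsi : psi d @[d --> 0^'+] --> s x.
  have -> : s x = (s x + b x) - b x by ring.
  apply: cvgB => //; [exact: hsf | exact: cvg_cst].
case E : (limn_esup (fun n => (sn n x)%:E)) => [r| |].
- rewrite lee_fin; apply: (cvgr_to_ge cpsi).
  near=> d; have := key d; rewrite E lee_fin; apply.
  by near: d; exact: nbhs_right_gt.
- by have := key 1 ltr01; rewrite E.
- exact: leNye.
Unshelve. all: by end_near.
Qed.
Section P2.
Local Open Scope ereal_scope.
Import HBNNSimple.
Lemma le_int_nn {d} {T : measurableType d} {R : realType}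
  (mu : {measure set T -> \bar R}) (f g : T -> \bar R) :
  (forall x, 0 <= f x) -> (forall x, f x <= g x) ->
  \int[mu]_x f x <= \int[mu]_x g x.
Proof.
move=> f0 fg; rewrite !ge0_integralTE //; last by move=> x; exact: le_trans (f0 x) (fg x).
apply: le_ereal_sup => _ [h hf <-]; exists h => // x; exact: le_trans (hf x) (fg x).
Qed.

Lemma le_limn_esup' (R : realType) (u v : (\bar R)^nat) :
  (forall n, (u n <= v n)%E) -> (limn_esup u <= limn_esup v)%E.
Proof.
move=> uv; rewrite !limn_esup_lim; apply: lee_lim; try exact: is_cvg_esups.
apply: nearW => n; apply: ge_ereal_sup => _ [m /= hm <-].
apply: le_trans (uv m) _; apply: ereal_sup_ubound; by exists m.
Qed.

Lemma part2 {d} {T : measurableType d} {R : realType}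
  (P : {measure set T -> \bar R}) (fn : nat -> T -> R) (fl : T -> R) (G : T -> R)
  (f0 : forall n w, (0 <= fn n w)%R) (fG : forall n w, (fn n w <= G w)%R)
  (iG : P.-integrable setT (fun w => (G w)%:E))
  (hlim : forall w, limn_esup (fun n => (fn n w)%:E) <= (fl w)%:E) :
  limn_esup (fun n => \int[P]_w (fn n w)%:E) <= \int[P]_w (fl w)%:E.
Proof.
have G0 w : (0 <= G w)%R by exact: le_trans (f0 0%N w) (fG 0%N w).
have iGfin : \int[P]_w (G w)%:E < +oo.
  move/integrableP : iG => [_]; apply: le_lt_trans.
  apply: le_int_nn => w; first by rewrite lee_fin.
  by rewrite gee0_abs // lee_fin.
have Ifin n : \int[P]_w (fn n w)%:E \is a fin_num.
  rewrite ge0_fin_numE; last by apply: integral_ge0 => w _; rewrite lee_fin.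
  apply: le_lt_trans iGfin; apply: le_int_nn => w; rewrite lee_fin //.
apply/lee_addgt0Pr => eps eps0.
have H n : exists h : {nnsfun T >-> R}, (forall w, (h w)%:E <= (fn n w)%:E) /\
    \int[P]_w (fn n w)%:E < \int[P]_w (h w)%:E + eps%:E.
  have := Ifin n; rewrite ge0_integralTE; last by move=> w; rewrite lee_fin.
  move=> /(ub_ereal_sup_adherent eps0) [_ [h hh <-]].
  rewrite -ge0_integralTE; last by move=> w; rewrite lee_fin.
  rewrite lteBlDr // => hlt; exists h; split => //.
  apply: lt_le_trans hlt _; apply: leeD2r.
  rewrite ge0_integralTE; last by move=> w; rewrite lee_fin.
  by apply: ereal_sup_ubound; exists h.
have [h hh] := choice H.
pose Hs n w := esups (fun m => (h m w)%:E) n.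
have mh m : measurable_fun setT (fun w => (h m w)%:E).
  by apply/(measurable_EFinP setT (h m)); exact: measurable_funPT.
have mH n : measurable_fun setT (Hs n) := measurable_realfun.measurable_fun_esups mh n.
pose L w := limn_esup (fun m => (h m w)%:E).
have mL : measurable_fun setT L := measurable_realfun.measurable_fun_limn_esup mh.
have hfG m w : (h m w)%:E <= (G w)%:E.
  by apply: le_trans ((hh m).1 w) _; rewrite lee_fin.
have H0 n w : 0 <= Hs n w.
  apply: le_trans (_ : (h n w)%:E <= _); first by rewrite lee_fin; exact: fun_ge0.
  by apply: ereal_sup_ubound; exists n => /=.
have HG n w : Hs n w <= (G w)%:E.
  by apply: ge_ereal_sup => _ [m _ <-]; exact: hfG.
have f_f : {ae P, forall w, setT w -> Hs ^~ w @ \oo --> L w}.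
  apply: aeW => w _; rewrite /L limn_esup_lim; exact: is_cvg_esups.
have f_g : {ae P, forall w n, setT w -> `|Hs n w| <= (G w)%:E}.
  by apply: aeW => w n _; rewrite gee0_abs //; exact: HG.
have [_ _ cI] := dominated_convergence measurableT mH mL f_f iG f_g.
have step n : esups (fun m => \int[P]_w (fn m w)%:E) n <= \int[P]_w Hs n w + eps%:E.
  apply: ge_ereal_sup => _ [m /= nm <-].
  apply: le_trans (ltW (hh m).2) _; apply: leeD2r.
  apply: le_int_nn => w; first by rewrite lee_fin; exact: fun_ge0.
  by apply: ereal_sup_ubound; exists m.
have cI' : (fun n => \int[P]_w Hs n w + eps%:E) @ \oo --> \int[P]_w L w + eps%:E.
  apply: cvgeD; [exact: fin_num_adde_defl | exact: cI | exact: cvg_cst].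
have le1 : limn_esup (fun n => \int[P]_w (fn n w)%:E) <= \int[P]_w L w + eps%:E.
  rewrite limn_esup_lim -(cvg_lim _ cI') //; apply: lee_lim.
  - exact: is_cvg_esups.
  - by apply/cvg_ex; eexists; exact: cI'.
  - exact: nearW.
apply: le_trans le1 _; apply: leeD2r; apply: le_int_nn => w.
- have -> : 0 = limn_esup (fun _ : nat => 0 : \bar R).
    by rewrite (cvg_limn_einf_sup (cvg_cst 0)).2.
  apply: le_limn_esup' => m; rewrite lee_fin; exact: fun_ge0.
- apply: le_trans (hlim w); apply: le_limn_esup' => m; exact: (hh m).1.
Qed.
End P2.

Lemma coord_le {R : realType} {k : nat} (y : 'rV[R]_k) (i : 'I_k) : `|y ord0 i| <= `|y|.
Proof.
have -> : `|y| = mx_norm y by [].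
rewrite mx_normrE.
exact: (le_bigmax _ (fun ij : 'I_1 * 'I_k => `|y ij.1 ij.2|) (ord0, i)).
Qed.

Lemma dotv_le {R : realType} {k : nat} (u y : 'rV[R]_k) (M : R) :
  `|u| <= M -> dotv u y <= k%:R * M * `|y|.
Proof.
move=> hu; rewrite /dotv.
apply: le_trans (_ : \sum_(i < k) M * `|y| <= _).
- apply: ler_sum => i _; apply: le_trans (ler_norm _) _; rewrite normrM.
  apply: ler_pM => //; last exact: coord_le.
  exact: le_trans (coord_le u i) hu.
- by rewrite sumr_const card_ord -mulrA mulr_natl.
Qed.

Theorem proposition4 (R : realType) (k : nat) (hk : (1 <= k)%N)
  (Gamma : set 'rV[R]_k)
  (hGc : compact Gamma) (hGn : Gamma !=set0) (hGp : Gamma `<=` nonneg)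
  (qn : nat -> 'rV[R]_k -> 'rV[R]_k) (sn : nat -> 'rV[R]_k -> R)
  (q : 'rV[R]_k -> 'rV[R]_k) (s : 'rV[R]_k -> R)
  (hMn : forall n, in_M Gamma (qn n) (sn n))
  (hM : in_M Gamma q s)
  (hconv : forall x : 'rV[R]_k,
      (fun n => payoff (qn n) (sn n) x) @ \oo --> payoff q s x)
  (hsf : seller_favorable q s) :
  (forall x : 'rV[R]_k, nonneg x ->
      (limn_esup (fun n => (sn n x)%:E) <= (s x)%:E)%E)
  /\
  (forall (d : measure_display) (T : measurableType d) (P : probability T R)
          (X : T -> 'rV[R]_k),
      (forall i : 'I_k, measurable_fun setT (fun w => X w ord0 i)) ->
      (forall w, nonneg (X w)) ->
      P.-integrable setT (fun w => (`|X w|)%:E) ->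
      (limn_esup (fun n => \int[P]_w (sn n (X w))%:E)
         <= \int[P]_w (s (X w))%:E)%E).
Proof.
have hic n := (hMn n).2.1.
have H1 := part1 qn sn q s hic hconv hsf.
split => //.
move=> d T P X hmX hXn hint.
have [M0 [_ hM0]] := compact_bounded hGc.
pose M := `|M0| + 1.
have hMb : forall u, Gamma u -> `|u| <= M.
  move=> u gu; apply: (hM0 M) => //.
  by rewrite /M; apply: le_lt_trans (ler_norm M0) _; rewrite ltrDl.
pose C := k%:R * M.
apply: (@part2 _ _ _ P (fun n w => sn n (X w)) (fun w => s (X w)) (fun w => C * `|X w|)).
- by move=> n w; exact: (hMn n).2.2.2 (X w) (hXn w).
- move=> n w; have := (hMn n).2.2.1 (X w) (hXn w); rewrite subr_ge0 => h.
  have hg : Gamma (qn n (X w)) := (hMn n).1 (X w) (hXn w).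
  have := dotv_le (qn n (X w)) (X w) M (hMb _ hg).
  rewrite -/C => h2.
  exact: le_trans h h2.
- have -> : (fun w => (C * `|X w|)%:E) = (fun w => C%:E * (`|X w|)%:E)%E.
    by apply/funext => w; rewrite EFinM.
  exact: integrableZl.
- by move=> w; exact: H1.
Qed.
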